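(* Let $0<d<\pi/2$, $\mathscr{D}_d=\{\zeta\in\mathbb{C}:|\Im\zeta|<d\}$, and $\psi(t)=\log(1+e^{\pi\sinh t})$. Assume $f$ is analytic on $\psi(\mathscr{D}_d)$ and there are constants $K>0$, $\beta>0$, $0<\alpha\le1$ with $|f(z)|\le K\left|\left(\frac{z}{1+z}\right)^{\alpha-1}e^{-\beta z}\right|$ for all $z\in\psi(\mathscr{D}_d)$. Then $F(\zeta)=f(\psi(\zeta))\psi'(\zeta)$ belongs to $\mathbf{L}^{\mathrm{DE}}_{L,R,2\alpha,2\beta}(\mathscr{D}_d)$ with $L=2(\tilde c_d)^{1-\alpha}K$ and $R=2(e^{\pi/12})^{1-\alpha}K$, where $c_d=1+1/\cos(\frac\pi2\sin d)$ and $\tilde c_d=\frac{1+\log(1+c_d)}{\log(1+c_d)}c_d$.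
   Context: For positive $L,R,a,b$ and $0<d<\pi/2$, $\mathbf{L}^{\mathrm{DE}}_{L,R,a,b}(\mathscr{D}_d)$ is the set of functions $F$ analytic on $\mathscr{D}_d$ such that for all $\zeta\in\mathscr{D}_d$, $|F(\zeta)|\le\frac{(\pi/2)L|\cosh\zeta|}{|1+e^{-\pi\sinh\zeta}|^{a/2}|1+e^{\pi\sinh\zeta}|^{b/2}}$, and for all $x\in\mathbb{R}$, $|F(x)|\le\frac{(\pi/2)R\cosh x}{(1+e^{-\pi\sinh x})^{a/2}(1+e^{\pi\sinh x})^{b/2}}$. Complex logarithms and powers use principal branches. *)

(* Defs.v *)
From Stdlib Require Import Reals.
From Coquelicot Require Import Coquelicot.
Open Scope R_scope.

Definition Cexp (z : C) : C :=
  (exp (Re z) * cos (Im z), exp (Re z) * sin (Im z)).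

Definition Csinh (z : C) : C := ((Cexp z - Cexp (- z)) / 2)%C.
Definition Ccosh (z : C) : C := ((Cexp z + Cexp (- z)) / 2)%C.

(* principal argument, with values in (-PI, PI]  (Arg 0 = 0) *)
Definition Arg (z : C) : R :=
  let x := Re z in let y := Im z in
  if Rlt_dec 0 x then atan (y / x)
  else if Rlt_dec x 0 then
         (if Rle_dec 0 y then atan (y / x) + PI else atan (y / x) - PI)
  else if Rlt_dec 0 y then PI / 2
  else if Rlt_dec y 0 then - (PI / 2)
  else 0.

Definition CLog (z : C) : C := (ln (Cmod z), Arg z).

Definition Cppow (w s : C) : C := Cexp (s * CLog w).

Definition analytic_on (S : C -> Prop) (g : C -> C) : Prop :=
  forall z, S z -> ex_derive (K := C_AbsRing) (V := C_NormedModule) g z.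

Definition strip (d : R) (z : C) : Prop := Rabs (Im z) < d.

Definition LDE (L Rc a b d : R) (F : C -> C) : Prop :=
  analytic_on (strip d) F /\
  (forall zeta, strip d zeta ->
     Cmod (F zeta) <=
       (PI / 2) * L * Cmod (Ccosh zeta) /
       (Rpower (Cmod (1 + Cexp (- (RtoC PI * Csinh zeta)))) (a / 2) *
        Rpower (Cmod (1 + Cexp (RtoC PI * Csinh zeta))) (b / 2))) /\
  (forall x : R,
     Cmod (F (RtoC x)) <=
       (PI / 2) * Rc * cosh x /
       (Rpower (1 + exp (- (PI * sinh x))) (a / 2) *
        Rpower (1 + exp (PI * sinh x)) (b / 2))).

(* psi is the branch of log(1 + exp(pi sinh zeta)) that is analytic on the
   (simply connected) strip D_d and real on the real axis; psi' its derivative.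
   These conditions determine psi uniquely on D_d. *)
Definition is_DE_psi (d : R) (psi psi' : C -> C) : Prop :=
  (forall zeta, strip d zeta ->
     Cexp (psi zeta) = (1 + Cexp (RtoC PI * Csinh zeta))%C) /\
  (forall x : R, psi (RtoC x) = RtoC (ln (1 + exp (PI * sinh x)))) /\
  (forall zeta, strip d zeta ->
     is_derive (K := C_AbsRing) (V := C_NormedModule) psi zeta (psi' zeta)).

Definition image_strip (d : R) (psi : C -> C) (z : C) : Prop :=
  exists zeta, strip d zeta /\ z = psi zeta.

Definition c_d (d : R) : R := 1 + 1 / cos (PI / 2 * sin d).
Definition ctilde_d (d : R) : R :=
  (1 + ln (1 + c_d d)) / ln (1 + c_d d) * c_d d.

(* Main.v *)
Require Import Defs.
From Stdlib Require Import Reals.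
From Coquelicot Require Import Coquelicot.
From Stdlib Require Import Lra Psatz Machin.
Open Scope R_scope.


Lemma Ceq (a b : C) : Re a = Re b -> Im a = Im b -> a = b.
Proof. destruct a, b; simpl; intros -> ->; reflexivity. Qed.

Lemma Cexp_add a b : Cexp (a + b)%C = (Cexp a * Cexp b)%C.
Proof.
destruct a as [x y], b as [u v]. unfold Cexp, Cmult, Cplus; simpl.
rewrite exp_plus, cos_plus, sin_plus. f_equal; ring.
Qed.

Lemma Cexp_0 : Cexp 0 = 1.
Proof. apply Ceq; unfold Cexp; simpl; rewrite exp_0; [rewrite cos_0|rewrite sin_0]; ring. Qed.

Lemma Cmod_Cexp z : Cmod (Cexp z) = exp (Re z).
Proof.
destruct z as [x y]; unfold Cexp, Cmod; simpl.
match goal with |- sqrt ?a = _ => replace a with (exp x * exp x) end.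
- apply sqrt_square, Rlt_le, exp_pos.
- assert (H := sin2_cos2 y); unfold Rsqr in H.
  transitivity (exp x * exp x * (sin y * sin y + cos y * cos y)); [rewrite H; ring | ring].
Qed.

Lemma Cexp_neq0 z : Cexp z <> 0.
Proof. intro H. assert (Cmod (Cexp z) = 0) by (rewrite H; apply Cmod_0).
rewrite Cmod_Cexp in H0. generalize (exp_pos (Re z)); lra. Qed.

Lemma Cexp_opp z : (Cexp (- z) * Cexp z)%C = 1.
Proof. rewrite <- Cexp_add. replace (- z + z)%C with (RtoC 0) by (rewrite Cplus_comm, Cplus_opp_r; reflexivity). apply Cexp_0. Qed.

Lemma Rabs_le_inv x y : Rabs x <= y -> -y <= x <= y.
Proof. unfold Rabs; destruct (Rcase_abs x); lra. Qed.

Lemma exp_small t : Rabs t <= /2 -> 1 + t <= exp t <= 1 + t + 2 * t^2.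
Proof.
intro Ht. apply Rabs_le_inv in Ht.
split; [apply exp_ineq1_le|].
assert (H1 := exp_ineq1_le (- t)).
assert (H2 : exp t * exp (- t) = 1) by (rewrite <- exp_plus; replace (t + - t) with 0 by ring; apply exp_0).
assert (H3 := exp_pos t).
assert (H4 : exp t * (1 - t) <= 1) by nra.
nra.
Qed.

Lemma sin_small b : Rabs b <= /2 -> Rabs (sin b - b) <= b^2.
Proof.
intro Hb.
assert (Hpos : forall x, 0 <= x <= /2 -> x - x^3/6 <= sin x <= x).
{ intros x Hx. split.
  - destruct (pre_sin_bound x 0) as [H _]; try lra.
    unfold sin_approx, sin_term in H. simpl in H. lra.
  - destruct (Req_dec x 0) as [->|Hn]; [rewrite sin_0; lra|].
    left; apply sin_lt_x; lra. }
destruct (Rle_lt_dec 0 b) as [Hb0|Hb0].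
- rewrite Rabs_right in Hb by lra. destruct (Hpos b) as [A B]; [lra|].
  apply Rabs_le; split; nra.
- rewrite Rabs_left in Hb by lra. destruct (Hpos (-b)) as [A B]; [lra|].
  rewrite sin_neg in A, B. apply Rabs_le; split; nra.
Qed.

Lemma cos_small b : Rabs b <= /2 -> 1 - b^2/2 <= cos b <= 1.
Proof.
intro Hb. apply Rabs_le_inv in Hb. split.
- destruct (pre_cos_bound b 0) as [H _]; try lra.
  unfold cos_approx, cos_term in H. simpl in H. lra.
- apply COS_bound.
Qed.

Lemma Cmod_le_sum c : Cmod c <= Rabs (Re c) + Rabs (Im c).
Proof.
destruct c as [p q]; unfold Cmod; simpl.
apply Rsqr_incr_0_var.
- rewrite Rsqr_sqrt by nra. unfold Rsqr.
  assert (0 <= Rabs p * Rabs q) by (apply Rmult_le_pos; apply Rabs_pos).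
  replace (p * (p*1) + q * (q*1)) with (Rabs p * Rabs p + Rabs q * Rabs q).
  + nra.
  + rewrite <- !Rabs_mult. rewrite !Rabs_right by nra. ring.
- assert (0 <= Rabs p) by apply Rabs_pos. assert (0 <= Rabs q) by apply Rabs_pos. lra.
Qed.

Lemma Re_le_Cmod c : Rabs (Re c) <= Cmod c.
Proof. apply re_le_Cmod. Qed.
Lemma Im_le_Cmod c : Rabs (Im c) <= Cmod c.
Proof. destruct c as [p q]; unfold Cmod; simpl.
rewrite <- sqrt_Rsqr_abs. apply sqrt_le_1_alt. unfold Rsqr. nra. Qed.

Lemma Cexp_taylor1 h : Cmod h <= /2 -> Cmod (Cexp h - 1 - h)%C <= 5 * Cmod h ^ 2.
Proof.
intro Hh.
assert (Ha := Re_le_Cmod h). assert (Hb := Im_le_Cmod h).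
assert (H2 := Cmod2_alt h).
destruct h as [a b]. simpl in Ha, Hb, H2.
set (r := Cmod (a,b)) in *.
eapply Rle_trans; [apply Cmod_le_sum|].
unfold Cexp, Cminus, Cplus, Copp; simpl.
destruct (exp_small a) as [E1 E2]; [lra|].
destruct (cos_small b) as [C1 C2]; [lra|].
assert (S1 := sin_small b ltac:(lra)).
apply Rabs_le_inv in S1.
assert (Ha' := Rabs_le_inv _ _ Ha). assert (Hb' := Rabs_le_inv _ _ Hb).
assert (Hexp := exp_pos a).
assert (Hsin := SIN_bound b).
assert (X1 : Rabs (exp a * cos b + - (1) + - a) <= b^2 + 2 * a^2).
{ assert (exp a <= 2) by nra.
  assert (P1 : exp a * (cos b - 1) <= 0) by nra.
  assert (P2 : exp a * (cos b - 1) >= - (b^2)).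
  { assert (exp a * (cos b - 1) >= exp a * (- (b^2/2))) by nra. nra. }
  apply Rabs_le. split; nra. }
assert (X2 : Rabs (exp a * sin b + - 0 + - b) <= 2 * b^2 + a^2 + b^2).
{ replace (exp a * sin b + - 0 + - b) with (exp a * (sin b - b) + (exp a - 1) * b) by ring.
  eapply Rle_trans; [apply Rabs_triang|].
  rewrite !Rabs_mult. rewrite (Rabs_right (exp a)) by lra.
  assert (Rabs (exp a - 1) <= 2 * Rabs a).
  { apply Rabs_le. unfold Rabs; destruct (Rcase_abs a); nra. }
  assert (Rabs (sin b - b) <= b^2) by (apply Rabs_le; lra).
  assert (Rabs a * Rabs b * 2 <= a^2 + b^2).
  { assert (Rabs a * Rabs a = a^2) by (rewrite <- Rabs_mult; rewrite Rabs_right; [ring | nra]).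
    assert (Rabs b * Rabs b = b^2) by (rewrite <- Rabs_mult; rewrite Rabs_right; [ring | nra]).
    assert (0 <= (Rabs a - Rabs b)^2) by apply pow2_ge_0. lra. }
  assert (0 <= Rabs b) by apply Rabs_pos.
  assert (0 <= Rabs (exp a - 1)) by apply Rabs_pos.
  assert (0 <= Rabs (sin b - b)) by apply Rabs_pos.
  assert (exp a <= 2) by nra.
  nra. }
nra.
Qed.
Lemma is_derive_Cexp z : is_derive (K:=C_AbsRing) (V:=C_NormedModule) Cexp z (Cexp z).
Proof.
split; [apply is_linear_scal_l|].
intros x Hx. apply (is_filter_lim_locally_unique (K:=C_AbsRing) (V:=AbsRing_NormedModule C_AbsRing)) in Hx. subst x.
intros eps.
set (M := exp (Re z)).
assert (HM : 0 < M) by apply exp_pos.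
assert (Hd : 0 < Rmin (/2) (eps / (5 * M))).
{ apply Rmin_pos; [lra|]. apply Rdiv_lt_0_compat; [apply cond_pos|lra]. }
exists (mkposreal _ Hd). intros y Hy.
change (Cmod (y - z)%C < Rmin (/2) (eps / (5 * M))) in Hy.
change (Cmod ((Cexp y - Cexp z) - (y - z) * Cexp z)%C <= eps * Cmod (y - z)%C).
set (h := (y - z)%C) in *.
replace y with (z + h)%C by (unfold h; apply Ceq; unfold Re, Im; simpl; ring).
rewrite Cexp_add.
replace (Cexp z * Cexp h - Cexp z - h * Cexp z)%C with (Cexp z * (Cexp h - 1 - h))%C
  by (apply Ceq; unfold Re, Im; simpl; ring).
rewrite Cmod_mult, Cmod_Cexp. fold M.
assert (H1 : Cmod h <= /2) by (eapply Rle_trans; [left; apply Hy| apply Rmin_l]).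
assert (H2 : Cmod h <= eps / (5 * M)) by (eapply Rle_trans; [left; apply Hy| apply Rmin_r]).
assert (H3 := Cexp_taylor1 h H1).
assert (H4 := Cmod_ge_0 h).
assert (H5 : 5 * M * Cmod h <= eps).
{ apply (Rmult_le_compat_l (5 * M)) in H2; [|lra].
  replace (5 * M * (eps / (5 * M))) with (pos eps) in H2 by (field; lra). exact H2. }
assert (M * Cmod (Cexp h - 1 - h) <= M * (5 * Cmod h ^ 2)) by (apply Rmult_le_compat_l; lra).
nra.
Qed.
Notation CD f x l := (is_derive (K:=C_AbsRing) (V:=C_NormedModule) f x l).

Lemma conv1 (f : C -> C) x l : CD f x l -> is_derive (K:=C_AbsRing) (V:=AbsRing_NormedModule C_AbsRing) f x l.
Proof. unfold is_derive, filterdiff, is_domin; intro H; destruct H as [[H1 H2 H3] H4]; split; [split|]; [exact H1|exact H2| exact H3 |exact H4]. Qed.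
Lemma conv2 (f : C -> C) x l : is_derive (K:=C_AbsRing) (V:=AbsRing_NormedModule C_AbsRing) f x l -> CD f x l.
Proof. unfold is_derive, filterdiff, is_domin; intro H; destruct H as [[H1 H2 H3] H4]; split; [split|]; [exact H1|exact H2| exact H3 |exact H4]. Qed.

Lemma CD_ext (f g : C -> C) x l : (forall t, f t = g t) -> CD f x l -> CD g x l.
Proof. intros H. apply is_derive_ext. exact H. Qed.

Lemma CD_const (a x : C) : CD (fun _ => a) x (RtoC 0).
Proof. apply (is_derive_const (K:=C_AbsRing) (V:=C_NormedModule)). Qed.

Lemma CD_id (x : C) : CD (fun t => t) x (RtoC 1).
Proof. apply conv2. apply (is_derive_id (K:=C_AbsRing)). Qed.

Lemma CD_plus f g x df dg : CD f x df -> CD g x dg -> CD (fun t => f t + g t)%C x (df + dg)%C.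
Proof. intros Hf Hg. exact (is_derive_plus f g x df dg Hf Hg). Qed.

Lemma CD_opp f x df : CD f x df -> CD (fun t => - f t)%C x (- df)%C.
Proof. intros Hf. exact (is_derive_opp f x df Hf). Qed.

Lemma CD_mult f g x df dg : CD f x df -> CD g x dg -> CD (fun t => f t * g t)%C x (df * g x + f x * dg)%C.
Proof. intros Hf Hg. apply conv2. apply conv1 in Hf, Hg.
exact (is_derive_mult f g x df dg Hf Hg Cmult_comm). Qed.

Lemma CD_comp f g x df dg : CD f (g x) df -> CD g x dg -> CD (fun t => f (g t)) x (dg * df)%C.
Proof. intros Hf Hg. apply conv1 in Hg. exact (is_derive_comp f g x df dg Hf Hg). Qed.

Lemma CD_Cexp_comp g x dg : CD g x dg -> CD (fun t => Cexp (g t)) x (dg * Cexp (g x))%C.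
Proof. intros Hg. apply CD_comp; [apply is_derive_Cexp | exact Hg]. Qed.

Lemma CD_scal (c : C) f x df : CD f x df -> CD (fun t => c * f t)%C x (c * df)%C.
Proof. intros Hf. assert (H := CD_mult (fun _ => c) f x (RtoC 0) df (CD_const c x) Hf).
simpl in H. replace (c * df)%C with (0 * f x + c * df)%C. exact H.
apply Ceq; unfold Re, Im; simpl; ring. Qed.
Lemma CD_Cexp_neg x : CD (fun t => Cexp (- t)%C) x (- Cexp (- x))%C.
Proof.
assert (H := CD_Cexp_comp (fun t => (- t)%C) x (- RtoC 1)%C (CD_opp _ _ _ (CD_id x))).
replace (- Cexp (- x))%C with (- RtoC 1 * Cexp (- x))%C. exact H.
apply Ceq; unfold Re, Im; simpl; ring.
Qed.

Lemma CD_Csinh x : CD Csinh x (Ccosh x).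
Proof.
assert (H := CD_scal (/ RtoC 2)%C _ x _ (CD_plus _ _ x _ _ (is_derive_Cexp x) (CD_opp _ _ _ (CD_Cexp_neg x)))).
eapply CD_ext; [|replace (Ccosh x) with (/ RtoC 2 * (Cexp x + - - Cexp (- x)))%C; [exact H|]].
- intros t. unfold Csinh. apply Ceq; unfold Re, Im; simpl; field.
- unfold Ccosh. apply Ceq; unfold Re, Im; simpl; field.
Qed.

Lemma CD_Ccosh x : CD Ccosh x (Csinh x).
Proof.
assert (H := CD_scal (/ RtoC 2)%C _ x _ (CD_plus _ _ x _ _ (is_derive_Cexp x) (CD_Cexp_neg x))).
eapply CD_ext; [|replace (Csinh x) with (/ RtoC 2 * (Cexp x + - Cexp (- x)))%C; [exact H|]].
- intros t. unfold Ccosh. apply Ceq; unfold Re, Im; simpl; field.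
- unfold Csinh. apply Ceq; unfold Re, Im; simpl; field.
Qed.

Lemma Re_Csinh x y : Re (Csinh (x, y)) = sinh x * cos y.
Proof. unfold Csinh, Cexp, sinh. unfold Re, Im; simpl. rewrite cos_neg, sin_neg. field. Qed.
Lemma Im_Csinh x y : Im (Csinh (x, y)) = cosh x * sin y.
Proof. unfold Csinh, Cexp, cosh. unfold Re, Im; simpl. rewrite cos_neg, sin_neg. field. Qed.
Lemma Ccosh_real x : Ccosh (RtoC x) = RtoC (cosh x).
Proof. unfold Ccosh, Cexp, cosh. apply Ceq; unfold Re, Im, RtoC; simpl; rewrite ?cos_neg, ?sin_neg, ?cos_0, ?sin_0; field. Qed.
Lemma Csinh_real x : Csinh (RtoC x) = RtoC (sinh x).
Proof. unfold Csinh, Cexp, sinh. apply Ceq; unfold Re, Im, RtoC; simpl; rewrite ?cos_neg, ?sin_neg, ?cos_0, ?sin_0; field. Qed.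
Definition wf (z : C) : C := Cexp (RtoC PI * Csinh z).

Lemma strip_locally d z : strip d z -> locally (T := AbsRing_UniformSpace C_AbsRing) z (strip d).
Proof.
unfold strip; intros Hz.
assert (He : 0 < d - Rabs (Im z)) by lra.
exists (mkposreal _ He). intros t Ht.
change (Cmod (t - z)%C < d - Rabs (Im z)) in Ht.
assert (H1 := Im_le_Cmod (t - z)%C).
assert (H2 : Im t = Im z + Im (t - z)%C) by (unfold Im; simpl; ring).
rewrite H2. eapply Rle_lt_trans; [apply Rabs_triang|]. lra.
Qed.

Lemma psi'_eq d psi psi' (Hpsi : is_DE_psi d psi psi') z : strip d z ->
  psi' z = (RtoC PI * Ccosh z * wf z * Cexp (- psi z))%C.
Proof.
destruct Hpsi as [Hexp [_ Hder]]. intros Hz.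
assert (H1 := CD_Cexp_comp psi z (psi' z) (Hder z Hz)).
assert (H2 := CD_plus _ _ z _ _ (CD_const (RtoC 1) z)
   (CD_Cexp_comp _ z _ (CD_scal (RtoC PI) _ z _ (CD_Csinh z)))).
assert (H3 : CD (fun t => Cexp (psi t)) z (RtoC 0 + RtoC PI * Ccosh z * Cexp (RtoC PI * Csinh z))%C).
{ eapply is_derive_ext_loc; [|exact H2].
  generalize (strip_locally d z Hz). apply filter_imp. intros t Ht. simpl. symmetry; apply Hexp; exact Ht. }
apply is_C_derive_unique in H1. apply is_C_derive_unique in H3.
rewrite H1 in H3.
assert (E := Cexp_opp (psi z)).
transitivity (psi' z * Cexp (psi z) * Cexp (- psi z))%C.
- rewrite <- Cmult_assoc, (Cmult_comm (Cexp (psi z))), E. apply Ceq; unfold Re, Im; simpl; ring.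
- rewrite H3. unfold wf. apply Ceq; unfold Re, Im; simpl; ring.
Qed.
Lemma F_analytic d psi psi' (Hpsi : is_DE_psi d psi psi') f :
  analytic_on (image_strip d psi) f ->
  analytic_on (strip d) (fun zeta => (f (psi zeta) * psi' zeta)%C).
Proof.
intros Hf z Hz.
assert (Hder := proj2 (proj2 Hpsi)).
destruct (Hf (psi z)) as [df Hdf]; [exists z; split; auto|].
assert (G : exists l, CD (fun t => RtoC PI * Ccosh t * wf t * Cexp (- psi t))%C z l).
{ eexists.
  apply CD_mult; [apply CD_mult; [apply CD_mult|]|].
  - apply CD_const.
  - apply CD_Ccosh.
  - apply CD_Cexp_comp. apply CD_scal. apply CD_Csinh.
  - apply CD_Cexp_comp. apply CD_opp. apply Hder; exact Hz. }
destruct G as [l G].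
assert (G' : CD psi' z l).
{ eapply is_derive_ext_loc; [|exact G].
  generalize (strip_locally d z Hz). apply filter_imp. intros t Ht. symmetry. apply (psi'_eq d psi psi' Hpsi t Ht). }
eexists. apply CD_mult; [|exact G'].
apply CD_comp; [exact Hdf| apply Hder; exact Hz].
Qed.
Lemma PI_gt_314 : 314/100 < PI.
Proof.
destruct (PI_2_3_7_ineq 2) as [H _].
unfold PI_2_3_7_tg, tg_alt, Ratan_seq in H. simpl in H. lra.
Qed.
Lemma PI_lt_315 : PI < 315/100.
Proof.
destruct (PI_2_3_7_ineq 2) as [_ H].
unfold PI_2_3_7_tg, tg_alt, Ratan_seq in H. simpl in H. lra.
Qed.

Lemma abs_sin_le t : 0 <= t -> Rabs (sin t) <= t.
Proof.
intros Ht. destruct (Req_dec t 0) as [->|Hn]; [rewrite sin_0, Rabs_R0; lra|].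
assert (H1 := sin_lt_x t ltac:(lra)).
assert (H2 := SIN_bound t).
apply Rabs_le. split; [|lra].
destruct (Rle_lt_dec 1 t); [lra|].
assert (0 <= sin t) by (apply sin_ge_0; generalize PI_gt_314; lra). lra.
Qed.

Lemma cosh_sinh2 x : (sinh x)^2 = (cosh x)^2 - 1.
Proof.
unfold sinh, cosh.
assert (H : exp x * exp (- x) = 1) by (rewrite <- exp_plus; replace (x + - x) with 0 by ring; apply exp_0).
field_simplify. nra.
Qed.
Lemma cosh_ge_pos a : 0 <= a -> 1 + a^2/2 <= cosh a.
Proof.
intros Ha. unfold cosh.
set (u := exp a).
assert (Hu : 0 < u) by apply exp_pos.
assert (Hm : exp (- a) = / u) by (unfold u; rewrite exp_Ropp; reflexivity).
rewrite Hm.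
set (v := 1 + a + a^2/2 + a^3/6).
assert (Hv : v <= u).
{ unfold u, v. eapply Rle_trans; [|apply (exp_ge_taylor a 3 Ha)].
  simpl. unfold Rdiv. right. simpl. field. }
assert (Hv1 : 1 + a^2/2 <= v) by (unfold v; nra).
assert (Hf : (v - 1)^2 - a^2 * v >= 0).
{ unfold v. assert (0 <= a^4) by (apply pow_le; lra). assert (0 <= a^5) by (apply pow_le; lra).
  assert (0 <= a^6) by (apply pow_le; lra). nra. }
apply Rmult_le_reg_r with (2 * u); [lra|].
replace ((u + / u) / 2 * (2 * u)) with (u * u + 1) by (field; lra).
assert ((u - v) * (u + v - 2 - a^2) >= 0) by (apply Rle_ge, Rmult_le_pos; nra).
nra.
Qed.

Lemma cosh_ge a : 1 + a^2/2 <= cosh a.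
Proof.
destruct (Rle_lt_dec 0 a) as [H|H]; [apply cosh_ge_pos; exact H|].
replace (cosh a) with (cosh (- a)) by (unfold cosh; rewrite Ropp_involutive; field).
replace (a^2) with ((-a)^2) by ring. apply cosh_ge_pos; lra.
Qed.

Lemma sin_small_lb p : 0 <= p <= 4 -> p - p^3/6 <= sin p.
Proof. intros Hp. destruct (pre_sin_bound p 0) as [H _]; try lra.
unfold sin_approx, sin_term in H. simpl in H. lra. Qed.

Lemma sinb_bound x y d : 0 < d < PI/2 -> Rabs y < d ->
  Rabs (sin (PI/2 * cosh x * sin y)) <= cosh (PI/2 * sinh x * cos y) * sin (PI/2 * sin d).
Proof.
intros Hd Hy.
assert (Hpi1 := PI_gt_314). assert (Hpi2 := PI_lt_315).
assert (Hy2 : - d < y < d) by (revert Hy; unfold Rabs; destruct (Rcase_abs y); intros; lra). clear Hy. rename Hy2 into Hy.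
set (s := sin d).
assert (Hs0 : 0 < s) by (apply sin_gt_0; lra).
assert (Hs1 : s < 1).
{ rewrite <- sin_PI2. apply sin_increasing_1; lra. }
assert (Hsy1 : sin y < s) by (apply sin_increasing_1; lra).
assert (Hsy2 : - s < sin y).
{ unfold s; rewrite <- sin_neg. apply sin_increasing_1; lra. }
set (X := cosh x).
assert (HX : 1 <= X) by (unfold X; generalize (cosh_ge x); assert (0 <= x^2) by apply pow2_ge_0; lra).
set (phi := PI/2 * s).
assert (Hphi : 0 < phi < PI/2) by (unfold phi; split; nra).
assert (Hsphi : 0 < sin phi) by (apply sin_gt_0; lra).
assert (Hcphi : 0 <= cos phi) by (apply cos_ge_0; lra).
assert (Hcphi2 : cos phi <= PI/2 * (1 - s)).
{ rewrite <- sin_shift. eapply Rle_trans; [apply Rle_abs|]. eapply Rle_trans; [apply abs_sin_le; lra|].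
  unfold phi; lra. }
assert (Hsphi2 : s <= (1 + s) * sin phi).
{ assert (Hl := sin_small_lb phi ltac:(lra)).
  assert (Hq : phi - phi^3/6 = phi * (1 - PI^2 * s^2 / 24)) by (unfold phi; field).
  assert (1 - PI^2 * s^2/24 >= 1 - 4135/10000 * s^2).
  { assert (PI^2 <= 315/100 * 315/100) by nra. assert (0 <= s^2) by nra. nra. }
  assert (Hm : (1 + s) * (1 - 4135/10000 * s^2) >= 1) by nra.
  assert (0 < 1 - 4135/10000 * s^2) by nra.
  assert ((1 + s) * (phi * (1 - PI ^ 2 * s ^ 2 / 24)) >= (1+s) * (phi * (1 - 4135/10000 * s^2))).
  { apply Rle_ge, Rmult_le_compat_l; [lra|]. apply Rmult_le_compat_l; unfold phi in *; nra. }
  assert ((1+s) * (phi * (1 - 4135/10000 * s^2)) >= phi) by (unfold phi in *; nra).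
  assert (phi >= s) by (unfold phi; nra).
  nra. }
set (b := PI / 2 * cosh x * sin y).
set (a := PI / 2 * sinh x * cos y).
set (h := phi * (X - 1)).
assert (Hh : 0 <= h) by (unfold h; nra).
assert (Hb : Rabs b <= phi + h).
{ unfold b, h, phi. fold X. rewrite !Rabs_mult. rewrite (Rabs_right (PI/2)) by lra.
  rewrite (Rabs_right X) by lra.
  assert (Rabs (sin y) <= s) by (apply Rabs_le; lra).
  assert (0 <= Rabs (sin y)) by apply Rabs_pos.
  assert (X * Rabs (sin y) <= X * s) by (apply Rmult_le_compat_l; lra).
  assert (PI/2 * (X * Rabs (sin y)) <= PI/2 * (X * s)) by (apply Rmult_le_compat_l; lra).
  nra. }
assert (Hsb : Rabs (sin b) <= sin phi + h * cos phi).
{ set (be := Rabs b).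
  assert (Hbe : Rabs (sin b) = Rabs (sin be)).
  { unfold be. destruct (Rcase_abs b) as [Hl|Hl].
    - rewrite (Rabs_left b Hl), sin_neg, Rabs_Ropp; reflexivity.
    - rewrite (Rabs_right b Hl); reflexivity. }
  rewrite Hbe. assert (Hbe0 : 0 <= be) by apply Rabs_pos.
  destruct (Rle_lt_dec be phi) as [Hl|Hl].
  - rewrite Rabs_right by (apply Rle_ge, sin_ge_0; lra).
    assert (sin be <= sin phi) by (apply sin_incr_1; lra). nra.
  - set (h' := be - phi).
    replace be with (phi + h') by (unfold h'; ring).
    rewrite sin_plus.
    eapply Rle_trans; [apply Rabs_triang|]. rewrite !Rabs_mult.
    rewrite (Rabs_right (sin phi)) by lra. rewrite (Rabs_right (cos phi)) by lra.
    assert (Rabs (cos h') <= 1) by (apply Rabs_le; apply COS_bound).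
    assert (Rabs (sin h') <= h') by (apply abs_sin_le; unfold h'; lra).
    assert (h' <= h) by (unfold h', be; lra).
    nra. }
assert (Ha : cosh a >= 1 + (PI/2)^2 * (X - 1) * (1 - s^2)).
{ assert (H1 := cosh_ge a).
  assert (H2 : a^2 = (PI/2)^2 * (X^2 - 1) * (cos y)^2) by (unfold a, X; rewrite <- cosh_sinh2; ring).
  assert (H3 : (cos y)^2 = 1 - (sin y)^2) by (rewrite <- (sin2_cos2 y); unfold Rsqr; ring).
  assert (H4 : (sin y)^2 <= s^2) by nra.
  assert (H5 : (X^2 - 1) >= 2 * (X - 1)) by nra.
  assert (H6 : (X^2 - 1) * (cos y)^2 >= 2 * (X - 1) * (1 - s^2)).
  { rewrite H3. assert (0 <= X - 1) by lra. assert (0 <= 1 - s^2) by nra. nra. }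
  assert (0 <= (PI/2)^2) by nra.
  nra. }
fold b a. eapply Rle_trans; [exact Hsb|].
assert (Hk : h * cos phi <= (PI/2)^2 * (X - 1) * (1 - s^2) * sin phi).
{ unfold h. assert (0 <= X - 1) by lra.
  assert (phi * cos phi <= (PI/2)^2 * (1 - s^2) * sin phi).
  { assert (phi * cos phi <= (PI/2)^2 * s * (1 - s)).
    { replace ((PI/2)^2 * s * (1 - s)) with (phi * (PI/2 * (1 - s))) by (unfold phi; ring).
      apply Rmult_le_compat_l; lra. }
    assert ((PI/2)^2 * s * (1 - s) <= (PI/2)^2 * (1 - s) * ((1 + s) * sin phi)).
    { replace ((PI/2)^2 * s * (1 - s)) with ((PI/2)^2 * (1 - s) * s) by ring.
      apply Rmult_le_compat_l; [|lra]. apply Rmult_le_pos; nra. }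
    nra. }
  nra. }
nra.
Qed.
Lemma mod_lb_real E b phi : 0 < E -> 0 <= cos phi -> 0 <= sin phi ->
  Rabs (sin b) <= (E + / E) / 2 * sin phi ->
  (1 + E^2) * cos phi <= sqrt ((1 + E^2 * cos (2*b))^2 + (E^2 * sin (2*b))^2).
Proof.
intros HE Hc Hs Hb.
assert (H1 : (1 + E^2 * cos (2*b))^2 + (E^2 * sin (2*b))^2 = (1 + E^2)^2 - 4 * E^2 * (sin b)^2).
{ assert (Hsc := sin2_cos2 (2*b)). unfold Rsqr in Hsc.
  transitivity (1 + 2 * E^2 * cos (2*b) + E^4 * (sin (2*b) * sin (2*b) + cos (2*b) * cos (2*b))).
  - ring.
  - rewrite Hsc, cos_2a_sin. unfold Rsqr. ring. }
rewrite H1.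
assert (H2 : (sin b)^2 <= ((E + / E) / 2)^2 * (sin phi)^2).
{ assert (0 <= Rabs (sin b)) by apply Rabs_pos.
  assert (Rabs (sin b) * Rabs (sin b) = (sin b)^2) by (rewrite <- Rabs_mult; rewrite Rabs_right; [ring|nra]).
  assert (0 <= (E + / E)/2 * sin phi).
  { apply Rmult_le_pos; [|lra]. assert (0 < / E) by (apply Rinv_0_lt_compat; lra). lra. }
  nra. }
assert (H3 : 4 * E^2 * ((E + / E) / 2)^2 = (1 + E^2)^2) by (field; lra).
assert (H4 : 4 * E^2 * (sin b)^2 <= (1 + E^2)^2 * (sin phi)^2).
{ rewrite <- H3. assert (0 <= 4 * E^2) by nra. 
  replace (4 * E ^ 2 * ((E + / E) / 2) ^ 2 * sin phi ^ 2) with (4 * E^2 * (((E + / E) / 2) ^ 2 * sin phi ^ 2)) by ring.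
  apply Rmult_le_compat_l; lra. }
assert (H5 := sin2_cos2 phi). unfold Rsqr in H5.
rewrite <- (sqrt_pow2 ((1 + E^2) * cos phi)) by (apply Rmult_le_pos; nra).
apply sqrt_le_1_alt.
replace (((1 + E ^ 2) * cos phi) ^ 2) with ((1 + E^2)^2 * (1 - (sin phi)^2)).
- nra.
- replace (1 - sin phi ^ 2) with (cos phi ^ 2) by nra. ring.
Qed.
Definition Qp (z : R) : R := (299/1000) * z^0 + (-201/1000) * z^1 + (-103/6000) * z^2 + (49/6000) * z^3 + (33/8000) * z^4 + (397/360000) * z^5 + (1093/5040000) * z^6 + (29/840000) * z^7 + (1691/362880000) * z^8 + (-1/362880) * z^9.

Lemma pow_bound (u d : R) (n : nat) : -d <= u <= d -> -(d^n) <= u^n <= d^n.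
Proof.
intros H. assert (Ha : Rabs u <= d) by (apply Rabs_le; lra).
assert (H1 : Rabs (u ^ n) <= d ^ n).
{ rewrite <- RPow_abs. apply pow_incr. split; [apply Rabs_pos|exact Ha]. }
apply Rabs_le_inv in H1. exact H1.
Qed.

Lemma Qp_iv0 u : -(1/2) <= u <= (1/2) -> 0 < Qp ((1/2) + u).
Proof.
intros H.
replace (Qp ((1/2) + u)) with ((6054583693/30965760000) * u^0 + (-2433791639/11612160000) * u^1 + (16701401/5806080000) * u^2 + (28734047/1451520000) * u^3 + (4561121/580608000) * u^4 + (352999/181440000) * u^5 + (123881/362880000) * u^6 + (2573/90720000) * u^7 + (-2809/362880000) * u^8 + (-1/362880) * u^9) by (unfold Qp; field).
assert (B2 := pow_bound u (1/2) 2 H).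
assert (B3 := pow_bound u (1/2) 3 H).
assert (B4 := pow_bound u (1/2) 4 H).
assert (B5 := pow_bound u (1/2) 5 H).
assert (B6 := pow_bound u (1/2) 6 H).
assert (B7 := pow_bound u (1/2) 7 H).
assert (B8 := pow_bound u (1/2) 8 H).
assert (B9 := pow_bound u (1/2) 9 H).
simpl in B2, B3, B4, B5, B6, B7, B8, B9 |- *.
lra.
Qed.

Lemma Qp_iv1 u : -(1/4) <= u <= (1/4) -> 0 < Qp ((5/4) + u).
Proof.
intros H.
replace (Qp ((5/4) + u)) with ((27117989341/528482304000) * u^0 + (-92168652757/594542592000) * u^1 + (6231392023/74317824000) * u^2 + (4162759/72576000) * u^3 + (169044263/9289728000) * u^4 + (20460911/5806080000) * u^5 + (392939/1451520000) * u^6 + (-6703/90720000) * u^7 + (-9559/362880000) * u^8 + (-1/362880) * u^9) by (unfold Qp; field).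
assert (B2 := pow_bound u (1/4) 2 H).
assert (B3 := pow_bound u (1/4) 3 H).
assert (B4 := pow_bound u (1/4) 4 H).
assert (B5 := pow_bound u (1/4) 5 H).
assert (B6 := pow_bound u (1/4) 6 H).
assert (B7 := pow_bound u (1/4) 7 H).
assert (B8 := pow_bound u (1/4) 8 H).
assert (B9 := pow_bound u (1/4) 9 H).
simpl in B2, B3, B4, B5, B6, B7, B8, B9 |- *.
lra.
Qed.

Lemma Qp_iv2 u : -(1/16) <= u <= (1/16) -> 0 < Qp ((25/16) + u).
Proof.
intros H.
replace (Qp ((25/16) + u)) with ((8098734442273933/623423092948992000) * u^0 + (-3250451392953137/38963943309312000) * u^1 + (90951206458121/608811614208000) * u^2 + (3184114165927/38050725888000) * u^3 + (114162804811/4756340736000) * u^4 + (5695380421/1486356480000) * u^5 + (1392913/46448640000) * u^6 + (-433801/2903040000) * u^7 + (-24743/725760000) * u^8 + (-1/362880) * u^9) by (unfold Qp; field).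
assert (B2 := pow_bound u (1/16) 2 H).
assert (B3 := pow_bound u (1/16) 3 H).
assert (B4 := pow_bound u (1/16) 4 H).
assert (B5 := pow_bound u (1/16) 5 H).
assert (B6 := pow_bound u (1/16) 6 H).
assert (B7 := pow_bound u (1/16) 7 H).
assert (B8 := pow_bound u (1/16) 8 H).
assert (B9 := pow_bound u (1/16) 9 H).
simpl in B2, B3, B4, B5, B6, B7, B8, B9 |- *.
lra.
Qed.

Lemma Qp_iv3 u : -(1/16) <= u <= (1/16) -> 0 < Qp ((27/16) + u).
Proof.
intros H.
replace (Qp ((27/16) + u)) with ((194979552422647/38482906972160000) * u^0 + (-20184023266977/481036337152000) * u^1 + (20642854530737/112742891520000) * u^2 + (678433452553/7046430720000) * u^3 + (1549822077/58720256000) * u^4 + (627807037/165150720000) * u^5 + (-119869/1032192000) * u^6 + (-6633/35840000) * u^7 + (-26993/725760000) * u^8 + (-1/362880) * u^9) by (unfold Qp; field).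
assert (B2 := pow_bound u (1/16) 2 H).
assert (B3 := pow_bound u (1/16) 3 H).
assert (B4 := pow_bound u (1/16) 4 H).
assert (B5 := pow_bound u (1/16) 5 H).
assert (B6 := pow_bound u (1/16) 6 H).
assert (B7 := pow_bound u (1/16) 7 H).
assert (B8 := pow_bound u (1/16) 8 H).
assert (B9 := pow_bound u (1/16) 9 H).
simpl in B2, B3, B4, B5, B6, B7, B8, B9 |- *.
lra.
Qed.

Lemma Qp_iv4 u : -(1/16) <= u <= (1/16) -> 0 < Qp ((29/16) + u).
Proof.
intros H.
replace (Qp ((29/16) + u)) with ((996512245365509/346346162749440000) * u^0 + (1663503785635819/194819716546560000) * u^1 + (135003953920301/608811614208000) * u^2 + (20940244059787/190253629440000) * u^3 + (136643408191/4756340736000) * u^4 + (5424370517/1486356480000) * u^5 + (-13692731/46448640000) * u^6 + (-129949/580608000) * u^7 + (-29243/725760000) * u^8 + (-1/362880) * u^9) by (unfold Qp; field).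
assert (B2 := pow_bound u (1/16) 2 H).
assert (B3 := pow_bound u (1/16) 3 H).
assert (B4 := pow_bound u (1/16) 4 H).
assert (B5 := pow_bound u (1/16) 5 H).
assert (B6 := pow_bound u (1/16) 6 H).
assert (B7 := pow_bound u (1/16) 7 H).
assert (B8 := pow_bound u (1/16) 8 H).
assert (B9 := pow_bound u (1/16) 9 H).
simpl in B2, B3, B4, B5, B6, B7, B8, B9 |- *.
lra.
Qed.

Lemma Qp_iv5 u : -(1/16) <= u <= (1/16) -> 0 < Qp ((31/16) + u).
Proof.
intros H.
replace (Qp ((31/16) + u)) with ((3398318308937621/445302209249280000) * u^0 + (2702706778688047/38963943309312000) * u^1 + (809073077143423/3044058071040000) * u^2 + (23779031670923/190253629440000) * u^3 + (1176699413/38050725888) * u^4 + (4979911381/1486356480000) * u^5 + (-4725793/9289728000) * u^6 + (-771217/2903040000) * u^7 + (-4499/103680000) * u^8 + (-1/362880) * u^9) by (unfold Qp; field).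
assert (B2 := pow_bound u (1/16) 2 H).
assert (B3 := pow_bound u (1/16) 3 H).
assert (B4 := pow_bound u (1/16) 4 H).
assert (B5 := pow_bound u (1/16) 5 H).
assert (B6 := pow_bound u (1/16) 6 H).
assert (B7 := pow_bound u (1/16) 7 H).
assert (B8 := pow_bound u (1/16) 8 H).
assert (B9 := pow_bound u (1/16) 9 H).
simpl in B2, B3, B4, B5, B6, B7, B8, B9 |- *.
lra.
Qed.

Lemma Qp_iv6 u : -(1/8) <= u <= (1/8) -> 0 < Qp ((17/8) + u).
Proof.
intros H.
replace (Qp ((17/8) + u)) with ((93891680893799/3044058071040000) * u^0 + (139305301600499/761014517760000) * u^1 + (203824344713/594542592000) * u^2 + (443760865433/2972712960000) * u^3 + (2506897459/74317824000) * u^4 + (238331377/92897280000) * u^5 + (-1308733/1451520000) * u^6 + (-9703/29030400) * u^7 + (-8717/181440000) * u^8 + (-1/362880) * u^9) by (unfold Qp; field).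
assert (B2 := pow_bound u (1/8) 2 H).
assert (B3 := pow_bound u (1/8) 3 H).
assert (B4 := pow_bound u (1/8) 4 H).
assert (B5 := pow_bound u (1/8) 5 H).
assert (B6 := pow_bound u (1/8) 6 H).
assert (B7 := pow_bound u (1/8) 7 H).
assert (B8 := pow_bound u (1/8) 8 H).
assert (B9 := pow_bound u (1/8) 9 H).
simpl in B2, B3, B4, B5, B6, B7, B8, B9 |- *.
lra.
Qed.

Lemma Qp_iv7 u : -(1/8) <= u <= (1/8) -> 0 < Qp ((19/8) + u).
Proof.
intros H.
replace (Qp ((19/8) + u)) with ((809335826489/8053063680000) * u^0 + (292691477889091/761014517760000) * u^1 + (5562236291383/11890851840000) * u^2 + (547821981781/2972712960000) * u^3 + (666955987/18579456000) * u^4 + (67909193/92897280000) * u^5 + (-4570067/2903040000) * u^6 + (-316811/725760000) * u^7 + (-703/12960000) * u^8 + (-1/362880) * u^9) by (unfold Qp; field).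
assert (B2 := pow_bound u (1/8) 2 H).
assert (B3 := pow_bound u (1/8) 3 H).
assert (B4 := pow_bound u (1/8) 4 H).
assert (B5 := pow_bound u (1/8) 5 H).
assert (B6 := pow_bound u (1/8) 6 H).
assert (B7 := pow_bound u (1/8) 7 H).
assert (B8 := pow_bound u (1/8) 8 H).
assert (B9 := pow_bound u (1/8) 9 H).
simpl in B2, B3, B4, B5, B6, B7, B8, B9 |- *.
lra.
Qed.

Lemma Qp_iv8 u : -(1/4) <= u <= (1/4) -> 0 < Qp ((11/4) + u).
Proof.
intros H.
replace (Qp ((11/4) + u)) with ((2544145089151/7927234560000) * u^0 + (2439847563679/2972712960000) * u^1 + (52411018027/74317824000) * u^2 + (5508161111/23224320000) * u^3 + (307156883/9289728000) * u^4 + (-24775573/5806080000) * u^5 + (-4276033/1451520000) * u^6 + (-5563/9072000) * u^7 + (-23059/362880000) * u^8 + (-1/362880) * u^9) by (unfold Qp; field).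
assert (B2 := pow_bound u (1/4) 2 H).
assert (B3 := pow_bound u (1/4) 3 H).
assert (B4 := pow_bound u (1/4) 4 H).
assert (B5 := pow_bound u (1/4) 5 H).
assert (B6 := pow_bound u (1/4) 6 H).
assert (B7 := pow_bound u (1/4) 7 H).
assert (B8 := pow_bound u (1/4) 8 H).
assert (B9 := pow_bound u (1/4) 9 H).
simpl in B2, B3, B4, B5, B6, B7, B8, B9 |- *.
lra.
Qed.

Lemma Qp_iv9 u : -(69/400) <= u <= (69/400) -> 0 < Qp ((1269/400) + u).
Proof.
intros H.
replace (Qp ((1269/400) + u)) with ((4770761997506485009778378557/5872025600000000000000000000) * u^0 + (22793835302540669883288819/14680064000000000000000000) * u^1 + (28528318991428652213507/27525120000000000000000) * u^2 + (19285248332862429961/68812800000000000000) * u^3 + (330226658659407/22937600000000000) * u^4 + (-36934814519339/2580480000000000) * u^5 + (-16432882259/3225600000000) * u^6 + (-2273227/2688000000) * u^7 + (-53723/725760000) * u^8 + (-1/362880) * u^9) by (unfold Qp; field).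
assert (B2 := pow_bound u (69/400) 2 H).
assert (B3 := pow_bound u (69/400) 3 H).
assert (B4 := pow_bound u (69/400) 4 H).
assert (B5 := pow_bound u (69/400) 5 H).
assert (B6 := pow_bound u (69/400) 6 H).
assert (B7 := pow_bound u (69/400) 7 H).
assert (B8 := pow_bound u (69/400) 8 H).
assert (B9 := pow_bound u (69/400) 9 H).
simpl in B2, B3, B4, B5, B6, B7, B8, B9 |- *.
lra.
Qed.

Lemma Qp_pos z : 0 <= z <= 3345/1000 -> 0 < Qp z.
Proof.
intros H.
destruct (Rle_lt_dec z (1)) as [H0|H0].
{ replace z with ((1/2) + (z - (1/2))) by ring. apply Qp_iv0. lra. }
destruct (Rle_lt_dec z (3/2)) as [H1|H1].
{ replace z with ((5/4) + (z - (5/4))) by ring. apply Qp_iv1. lra. }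
destruct (Rle_lt_dec z (13/8)) as [H2|H2].
{ replace z with ((25/16) + (z - (25/16))) by ring. apply Qp_iv2. lra. }
destruct (Rle_lt_dec z (7/4)) as [H3|H3].
{ replace z with ((27/16) + (z - (27/16))) by ring. apply Qp_iv3. lra. }
destruct (Rle_lt_dec z (15/8)) as [H4|H4].
{ replace z with ((29/16) + (z - (29/16))) by ring. apply Qp_iv4. lra. }
destruct (Rle_lt_dec z (2)) as [H5|H5].
{ replace z with ((31/16) + (z - (31/16))) by ring. apply Qp_iv5. lra. }
destruct (Rle_lt_dec z (9/4)) as [H6|H6].
{ replace z with ((17/8) + (z - (17/8))) by ring. apply Qp_iv6. lra. }
destruct (Rle_lt_dec z (5/2)) as [H7|H7].
{ replace z with ((19/8) + (z - (19/8))) by ring. apply Qp_iv7. lra. }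
destruct (Rle_lt_dec z (3)) as [H8|H8].
{ replace z with ((11/4) + (z - (11/4))) by ring. apply Qp_iv8. lra. }
destruct (Rle_lt_dec z (669/200)) as [H9|H9].
{ replace z with ((1269/400) + (z - (1269/400))) by ring. apply Qp_iv9. lra. }
lra.
Qed.
Lemma Derive_n_exp m : forall x, Derive_n exp m x = exp x.
Proof.
induction m as [|m IH]; intros x; [reflexivity|].
simpl. rewrite (Derive_ext _ _ x IH). apply is_derive_unique.
apply is_derive_Reals, derivable_pt_lim_exp.
Qed.

Lemma ex_derive_n_exp k x : ex_derive_n exp k x.
Proof.
destruct k as [|k]; [exact I|]. simpl.
apply (ex_derive_ext exp). { intros t; symmetry; apply Derive_n_exp. }
exists (exp x). apply is_derive_Reals, derivable_pt_lim_exp.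
Qed.

Lemma INR_fact_S n : INR (Factorial.fact (S n)) = INR (S n) * INR (Factorial.fact n).
Proof. rewrite fact_simpl, mult_INR. reflexivity. Qed.

Lemma exp_taylor8 z : 0 < z ->
  exp z <= 1 + z + z^2/2 + z^3/6 + z^4/24 + z^5/120 + z^6/720 + z^7/5040 + z^8/40320
           + z^9/362880 * exp z.
Proof.
intros Hz.
destruct (Taylor_Lagrange exp 8 0 z Hz) as [c [Hc E]].
{ intros; apply ex_derive_n_exp. }
rewrite E at 1.
assert (exp c <= exp z) by (left; apply exp_increasing; lra).
cbn [sum_f_R0]. rewrite !Derive_n_exp. rewrite exp_0. rewrite !Rminus_0_r.
repeat rewrite INR_fact_S. change (INR (Factorial.fact 0)) with 1.
rewrite !INR_IZR_INZ. simpl Z.of_nat.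
assert (0 <= z^9) by (apply pow_le; lra).
assert (z ^ 9 / 362880 * exp c <= z ^ 9 / 362880 * exp z).
{ apply Rmult_le_compat_l; [|lra]. apply Rmult_le_pos; [lra|]. lra. }
match goal with |- ?L <= _ => replace L with (1 + z + z^2/2 + z^3/6 + z^4/24 + z^5/120 + z^6/720 + z^7/5040 + z^8/40320 + z^9/362880 * exp c) by field end.
lra.
Qed.

Lemma num_bound z : 0 < z -> (1 + z) * (1 - exp (- z)) <= 1299/1000 * z.
Proof.
intros Hz.
set (E := exp z).
assert (HE : 0 < E) by apply exp_pos.
assert (Hm : exp (- z) = / E) by (unfold E; rewrite exp_Ropp; reflexivity).
rewrite Hm.
assert (Main : E * (1 - 299/1000 * z) <= 1 + z).
{ destruct (Rle_lt_dec (1000/299) z) as [Hb|Hb].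
  - assert (1 - 299/1000 * z <= 0) by lra. nra.
  - set (S := 1 + z + z^2/2 + z^3/6 + z^4/24 + z^5/120 + z^6/720 + z^7/5040 + z^8/40320).
    set (R := z^9/362880).
    assert (HT : E <= S + R * E) by (apply exp_taylor8; exact Hz).
    assert (HR : R < 1).
    { unfold R. assert (z^9 <= (3345/1000)^9) by (apply pow_incr; lra). lra. }
    assert (HR0 : 0 <= R) by (unfold R; apply Rmult_le_pos; [apply pow_le; lra|lra]).
    assert (HQ : 0 < Qp z) by (apply Qp_pos; lra).
    assert (HP : (1 + z) * (1 - R) - S * (1 - 299/1000 * z) = z * Qp z)
      by (unfold R, S, Qp; field).
    assert (H1 : E * (1 - R) <= S) by lra.
    assert (H2 : E * (1 - R) * (1 - 299/1000 * z) <= S * (1 - 299/1000 * z))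
      by (apply Rmult_le_compat_r; lra).
    assert (H3 : 0 < z * Qp z) by (apply Rmult_lt_0_compat; lra).
    assert (H4 : E * (1 - 299/1000 * z) * (1 - R) <= (1 + z) * (1 - R)) by nra.
    apply Rmult_le_reg_r with (1 - R); lra. }
apply Rmult_le_reg_r with E; [exact HE|].
replace ((1 + z) * (1 - / E) * E) with ((1 + z) * E - (1 + z)) by (field; lra).
nra.
Qed.
Lemma wf_parts x y : wf (x, y) =
  (exp (2 * (PI/2 * sinh x * cos y)) * cos (2 * (PI/2 * cosh x * sin y)),
   exp (2 * (PI/2 * sinh x * cos y)) * sin (2 * (PI/2 * cosh x * sin y))).
Proof.
unfold wf. 
assert (H1 : (RtoC PI * Csinh (x, y))%C = (2 * (PI/2 * sinh x * cos y), 2 * (PI/2 * cosh x * sin y))).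
{ apply Ceq.
  - rewrite re_mult. rewrite re_RtoC, im_RtoC, Re_Csinh. simpl. field.
  - rewrite im_mult. rewrite re_RtoC, im_RtoC, Im_Csinh. simpl. field. }
rewrite H1. reflexivity.
Qed.

Lemma Cmod_polar r t : 0 <= r -> Cmod (r * cos t, r * sin t) = r.
Proof.
intros Hr. unfold Cmod; simpl.
match goal with |- sqrt ?a = _ => replace a with (r * r) end.
- apply sqrt_square; exact Hr.
- assert (H := sin2_cos2 t); unfold Rsqr in H.
  transitivity (r * r * (sin t * sin t + cos t * cos t)); [rewrite H; ring | ring].
Qed.

Lemma mod_lb d z : 0 < d < PI/2 -> strip d z ->
  (1 + Cmod (wf z)) * cos (PI/2 * sin d) <= Cmod (1 + wf z)%C.
Proof.
intros Hd Hz. destruct z as [x y]. unfold strip in Hz. simpl in Hz.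
assert (Hb := sinb_bound x y d Hd Hz).
set (a := PI/2 * sinh x * cos y) in *.
set (b := PI/2 * cosh x * sin y) in *.
set (phi := PI/2 * sin d) in *.
assert (Hpi := PI_gt_314).
assert (Hs0 : 0 < sin d) by (apply sin_gt_0; lra).
assert (Hs1 : sin d <= 1) by apply SIN_bound.
assert (Hphi : 0 < phi < PI/2).
{ unfold phi; split; [nra|]. assert (PI/2 * sin d <= PI/2 * 1) by (apply Rmult_le_compat_l; lra). 
  assert (sin d < 1).
  { rewrite <- sin_PI2. apply sin_increasing_1; lra. }
  nra. }
rewrite wf_parts. fold a b.
assert (HE : exp (2 * a) = exp a ^ 2) by (simpl; rewrite Rmult_1_r, <- exp_plus; f_equal; ring).
rewrite HE.
replace (Cmod (exp a ^ 2 * cos (2 * b), exp a ^ 2 * sin (2 * b))) with (exp a ^ 2).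
2:{ rewrite Cmod_polar; [reflexivity|]. apply pow_le, Rlt_le, exp_pos. }
set (E := exp a).
replace (Cplus (RtoC 1) (E ^ 2 * cos (2 * b), E ^ 2 * sin (2 * b))) with
  ((1 + E ^ 2 * cos (2 * b), E ^ 2 * sin (2 * b)) : C) by (apply Ceq; unfold Re, Im; simpl; ring).
unfold Cmod; simpl fst; simpl snd.
apply mod_lb_real.
- apply exp_pos.
- apply cos_ge_0; lra.
- apply sin_ge_0; lra.
- replace ((E + / E) / 2) with (cosh a); [exact Hb|].
  unfold cosh, E. rewrite exp_Ropp. reflexivity.
Qed.
Lemma cos_ge_quad b : 1 - b^2/2 <= cos b.
Proof.
destruct (Rle_lt_dec (Rabs b) 2) as [H|H].
- apply Rabs_le_inv in H. destruct (pre_cos_bound b 0) as [H1 _]; try lra.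
  unfold cos_approx, cos_term in H1. simpl in H1. lra.
- assert (b^2 > 4).
  { revert H; unfold Rabs; destruct (Rcase_abs b); intros; nra. }
  generalize (COS_bound b). lra.
Qed.

Lemma one_minus_Cexp v : Cmod (1 - Cexp v)%C <= exp (Cmod v) - 1.
Proof.
destruct v as [a b].
set (r := Cmod (a, b)).
assert (Hr2 : r^2 = a^2 + b^2) by (unfold r; rewrite Cmod2_alt; reflexivity).
assert (Hr0 : 0 <= r) by apply Cmod_ge_0.
assert (Hra : Rabs a <= r) by (apply (Re_le_Cmod (a,b))).
apply Rabs_le_inv in Hra.
set (A := exp a). set (Rr := exp r).
assert (HA : 1 + a <= A) by apply exp_ineq1_le.
assert (HR : 1 + r <= Rr) by apply exp_ineq1_le.
assert (HRA : A * (1 + (r - a)) <= Rr).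
{ unfold Rr, A. replace r with (a + (r - a)) at 2 by ring. rewrite exp_plus.
  apply Rmult_le_compat_l; [left; apply exp_pos| apply exp_ineq1_le]. }
assert (HA0 : 0 < A) by apply exp_pos.
assert (Hc := cos_ge_quad b).
assert (Hsc := sin2_cos2 b). unfold Rsqr in Hsc.
unfold Cexp, Cmod, Cminus, Cplus, Copp. simpl fst. simpl snd. fold A.
rewrite <- (sqrt_pow2 (Rr - 1)) by lra.
apply sqrt_le_1_alt.
assert (E1 : (1 + - (A * cos b)) ^ 2 + (0 + - (A * sin b)) ^ 2 = 1 - 2 * A * cos b + A^2).
{ transitivity (1 - 2 * A * cos b + A^2 * (sin b * sin b + cos b * cos b)); [ring| rewrite Hsc; ring]. }
rewrite E1.
assert (E2 : - 2 * A * cos b <= - 2 * A + A * (r^2 - a^2)).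
{ assert (A * cos b >= A * (1 - b^2/2)) by (apply Rle_ge, Rmult_le_compat_l; lra). nra. }
set (X1 := Rr - A - A * (r - a)).
set (X2 := Rr + A - 2 - (r + a)).
assert (0 <= X1) by (unfold X1; nra).
assert (0 <= X2) by (unfold X2; lra).
assert (0 <= r - a) by lra. assert (0 <= r + a) by lra.
assert (Hp : (Rr - A) * (Rr + A - 2) >= A * (r - a) * (r + a)).
{ replace (Rr - A) with (A * (r - a) + X1) by (unfold X1; ring).
  replace (Rr + A - 2) with ((r + a) + X2) by (unfold X2; ring).
  assert (0 <= A * (r - a)) by nra.
  assert (0 <= A * (r - a) * X2) by nra.
  assert (0 <= X1 * (r + a)) by nra.
  assert (0 <= X1 * X2) by nra.
  nra. }
nra.
Qed.

Lemma exp_convex r L : 0 < L -> 0 <= r <= L -> L * (exp r - 1) <= r * (exp L - 1).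
Proof.
intros HL Hr.
assert (H1 : exp r * (1 + (0 - r)) <= exp 0).
{ replace 0 with (r + (0 - r)) at 2 by ring. rewrite exp_plus.
  apply Rmult_le_compat_l; [left; apply exp_pos| apply exp_ineq1_le]. }
assert (H2 : exp r * (1 + (L - r)) <= exp L).
{ replace L with (r + (L - r)) at 2 by ring. rewrite exp_plus.
  apply Rmult_le_compat_l; [left; apply exp_pos| apply exp_ineq1_le]. }
rewrite exp_0 in H1.
assert (H3 : (L - r) * (exp r * (1 + (0 - r))) <= (L - r) * 1) by (apply Rmult_le_compat_l; lra).
assert (H4 : r * (exp r * (1 + (L - r))) <= r * exp L) by (apply Rmult_le_compat_l; lra).
nra.
Qed.
Lemma exp_mono x y : x <= y -> exp x <= exp y.
Proof. intros [H|H]; [left; apply exp_increasing; exact H| rewrite H; lra]. Qed.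

Lemma final_alg (K alpha beta C0 A pi ch W P U Rz : R) :
  0 < K -> 0 < alpha <= 1 -> 0 < C0 -> 0 <= ch -> 0 < W -> 0 < P -> P = exp Rz -> 0 < pi ->
  0 <= A ->
  A <= K * (exp ((alpha - 1) * ln U) * exp (- (beta * Rz))) ->
  ln (W / P) <= ln C0 + ln U ->
  A * (pi * ch * W / P) <=
  pi / 2 * (2 * Rpower C0 (1 - alpha) * K) * ch /
    (Rpower (P / W) (2 * alpha / 2) * Rpower P (2 * beta / 2)).
Proof.
intros HK Ha HC Hch HW HP HPe Hpi HA HAb Hq.
replace (2 * alpha / 2) with alpha by field.
replace (2 * beta / 2) with beta by field.
unfold Rpower.
assert (HlP : ln P = Rz) by (rewrite HPe; apply ln_exp).
rewrite HlP.
assert (Hln : ln (P / W) = - ln (W / P)).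
{ rewrite <- ln_Rinv by (apply Rdiv_lt_0_compat; lra). f_equal. field; lra. }
rewrite Hln.
set (lq := ln (W / P)).
assert (Hqe : W / P = exp lq) by (unfold lq; rewrite exp_ln; [reflexivity| apply Rdiv_lt_0_compat; lra]).
replace (pi * ch * W / P) with (pi * ch * (W / P)) by (field; lra).
rewrite Hqe.
replace (pi / 2 * (2 * exp ((1 - alpha) * ln C0) * K) * ch /
   (exp (alpha * - lq) * exp (beta * Rz)))
  with (pi * ch * K * exp ((1 - alpha) * ln C0 + alpha * lq - beta * Rz)).
2:{ rewrite !Rminus_def, !exp_plus. rewrite exp_Ropp.
    replace (alpha * - lq) with (- (alpha * lq)) by ring. rewrite exp_Ropp.
    field. split; apply Rgt_not_eq, exp_pos. }
assert (Hstep : A * (pi * ch * exp lq) <= K * (exp ((alpha - 1) * ln U) * exp (- (beta * Rz))) * (pi * ch * exp lq)).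
{ apply Rmult_le_compat_r; [|exact HAb]. apply Rmult_le_pos; [nra|left; apply exp_pos]. }
eapply Rle_trans; [exact Hstep|].
replace (K * (exp ((alpha - 1) * ln U) * exp (- (beta * Rz))) * (pi * ch * exp lq))
  with (pi * ch * K * exp ((alpha - 1) * ln U + - (beta * Rz) + lq)) by (rewrite !exp_plus; ring).
apply Rmult_le_compat_l; [apply Rmult_le_pos; [nra|lra]|].
apply exp_mono.
assert (H1a : 0 <= 1 - alpha) by lra.
assert ((1 - alpha) * lq <= (1 - alpha) * (ln C0 + ln U)) by (apply Rmult_le_compat_l; [lra| unfold lq; lra]).
nra.
Qed.
Lemma Cdiv_0_r (z : C) : (z / 0)%C = 0.
Proof. apply Ceq; unfold Cdiv, Cinv, Cmult, Re, Im; simpl; rewrite ?Rmult_0_l, ?Rplus_0_l; unfold Rdiv; rewrite ?Rmult_0_l; ring. Qed.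

Lemma Cmod_Cppow u s : Cmod (Cppow u (RtoC s)) = exp (s * ln (Cmod u)).
Proof. unfold Cppow. rewrite Cmod_Cexp. f_equal. unfold CLog, Re; simpl. ring. Qed.

Lemma Cmod_one_plus_inv v : Cmod (1 + Cexp (- v))%C = Cmod (1 + Cexp v)%C / Cmod (Cexp v).
Proof.
assert (H : (1 + Cexp (- v) = Cexp (- v) * (1 + Cexp v))%C).
{ rewrite Cmult_plus_distr_l, Cexp_opp, Cmult_1_r. apply Cplus_comm. }
rewrite H, Cmod_mult, !Cmod_Cexp.
assert (Hr : Re (- v)%C = - Re v) by (unfold Re; simpl; ring). rewrite Hr, exp_Ropp.
field. apply Rgt_not_eq, exp_pos.
Qed.
Lemma ln_0 : ln 0 = 0.
Proof. unfold ln. case (Rlt_dec 0 0); intros H; [exfalso; lra|reflexivity]. Qed.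

Lemma bound_general d psi psi' (Hpsi : is_DE_psi d psi psi') (f : C -> C) K beta alpha C0 zeta :
  0 < K -> 0 < beta -> 0 < alpha <= 1 -> 0 < C0 ->
  (forall z, image_strip d psi z ->
     Cmod (f z) <= K * Cmod (Cppow (z / (1 + z))%C (RtoC (alpha - 1)) * Cexp (- (RtoC beta * z)))) ->
  strip d zeta ->
  Cmod (wf zeta) / Cmod (1 + wf zeta)%C <= C0 ->
  Cmod (wf zeta) / Cmod (1 + wf zeta)%C * (1 + Cmod (psi zeta)) <= C0 * Cmod (psi zeta) ->
  Cmod (f (psi zeta) * psi' zeta)%C <=
    PI / 2 * (2 * Rpower C0 (1 - alpha) * K) * Cmod (Ccosh zeta) /
    (Rpower (Cmod (1 + Cexp (- (RtoC PI * Csinh zeta)))) (2 * alpha / 2) *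
     Rpower (Cmod (1 + Cexp (RtoC PI * Csinh zeta))) (2 * beta / 2)).
Proof.
intros HK Hb Ha HC Hbound Hz Hq1 Hq2.
assert (Hexp := proj1 Hpsi zeta Hz).
set (z := psi zeta) in *.
assert (Hw := Cexp_neq0 (RtoC PI * Csinh zeta)).
fold (wf zeta) in Hexp, Hw |- *.
set (w := wf zeta) in *.
set (W := Cmod w). set (P := Cmod (1 + w)%C).
change (Cmod w) with W in Hq1, Hq2. change (Cmod (1 + w)%C) with P in Hq1, Hq2.
assert (HW : 0 < W) by (apply Cmod_gt_0; exact Hw).
assert (HPe : P = exp (Re z)) by (unfold P; rewrite <- Hexp; apply Cmod_Cexp).
assert (HP : 0 < P) by (rewrite HPe; apply exp_pos).
assert (Hz0 : z <> 0).
{ intro H0. rewrite H0, Cexp_0 in Hexp. apply Hw.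
  transitivity ((1 + w) - 1)%C; [apply Ceq; unfold Re, Im; simpl; ring|].
  rewrite <- Hexp. apply Ceq; unfold Re, Im; simpl; ring. }
rewrite (psi'_eq d psi psi' Hpsi zeta Hz). fold z w.
rewrite (Cmod_one_plus_inv (RtoC PI * Csinh zeta)). fold (wf zeta) w P W.
assert (Hpi := PI_gt_314).
replace (Cmod (f z * (RtoC PI * Ccosh zeta * w * Cexp (- z))))%C
  with (Cmod (f z) * (PI * Cmod (Ccosh zeta) * W / P)).
2:{ rewrite !Cmod_mult, Cmod_R, Cmod_Cexp, HPe. rewrite Rabs_right by lra.
    assert (Hr : Re (- z)%C = - Re z) by (unfold Re; simpl; ring). rewrite Hr, exp_Ropp.
    fold W. unfold Rdiv. ring. }
apply (final_alg K alpha beta C0 (Cmod (f z)) PI (Cmod (Ccosh zeta)) W P (Cmod (z / (1 + z))%C) (Re z));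
  try assumption; try lra.
- apply Cmod_ge_0.
- apply Cmod_ge_0.
- eapply Rle_trans; [apply Hbound; exists zeta; split; [exact Hz| reflexivity]|].
  rewrite Cmod_mult, Cmod_Cppow, Cmod_Cexp.
  assert (Hr : Re (- (RtoC beta * z))%C = - (beta * Re z)) by (unfold Re; simpl; ring).
  rewrite Hr. lra.
-
  assert (Hq0 : 0 < W / P) by (apply Rdiv_lt_0_compat; lra).
  destruct (Ceq_dec (1 + z)%C 0) as [H0|H0].
  + rewrite H0, Cdiv_0_r, Cmod_0.
    rewrite ln_0.
    rewrite Rplus_0_r. apply ln_le; [exact Hq0| exact Hq1].
  + assert (Hz1 : 0 < Cmod (1 + z)%C) by (apply Cmod_gt_0; exact H0).
    assert (Hzr : 0 < Cmod z) by (apply Cmod_gt_0; exact Hz0).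
    rewrite Cmod_div by exact H0.
    rewrite <- ln_mult by (try apply Rdiv_lt_0_compat; lra).
    apply ln_le; [exact Hq0|].
    assert (Ht : Cmod (1 + z)%C <= 1 + Cmod z) by (eapply Rle_trans; [apply Cmod_triangle| rewrite Cmod_1; lra]).
    assert (W / P * Cmod (1 + z)%C <= C0 * Cmod z).
    { eapply Rle_trans; [|exact Hq2]. apply Rmult_le_compat_l; lra. }
    apply Rmult_le_reg_r with (Cmod (1 + z)%C); [exact Hz1|].
    replace (C0 * (Cmod z / Cmod (1 + z)%C) * Cmod (1 + z)%C) with (C0 * Cmod z) by (field; lra).
    exact H.
Qed.
Lemma q_eq d psi psi' (Hpsi : is_DE_psi d psi psi') zeta : strip d zeta ->
  Cmod (wf zeta) / Cmod (1 + wf zeta)%C = Cmod (1 - Cexp (- psi zeta))%C.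
Proof.
intros Hz. assert (Hexp := proj1 Hpsi zeta Hz). fold (wf zeta) in Hexp.
set (z := psi zeta) in *. set (w := wf zeta) in *.
assert (H1 : (1 - Cexp (- z))%C = (w * Cexp (- z))%C).
{ transitivity ((Cexp z - 1) * Cexp (- z))%C.
  - transitivity (Cexp (- z) * Cexp z - Cexp (- z))%C; [rewrite Cexp_opp; reflexivity|].
    apply Ceq; unfold Re, Im; simpl; ring.
  - rewrite Hexp. apply Ceq; unfold Re, Im; simpl; ring. }
rewrite H1, Cmod_mult, Cmod_Cexp, <- Hexp, Cmod_Cexp.
assert (Hr : Re (- z)%C = - Re z) by (unfold Re; simpl; ring). rewrite Hr, exp_Ropp. reflexivity.
Qed.

Lemma hq_complex d psi psi' (Hpsi : is_DE_psi d psi psi') zeta : 0 < d < PI/2 -> strip d zeta ->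
  let q := Cmod (wf zeta) / Cmod (1 + wf zeta)%C in
  0 < ctilde_d d /\ q <= ctilde_d d /\ q * (1 + Cmod (psi zeta)) <= ctilde_d d * Cmod (psi zeta).
Proof.
intros Hd Hz q.
assert (Hpi := PI_gt_314).
set (kappa := cos (PI / 2 * sin d)).
assert (Hk : 0 < kappa).
{ unfold kappa. assert (Hs0 : 0 < sin d) by (apply sin_gt_0; lra).
  assert (sin d < 1) by (rewrite <- sin_PI2; apply sin_increasing_1; lra).
  apply cos_gt_0; nra. }
assert (Hk1 : kappa <= 1) by apply COS_bound.
assert (Hlb := mod_lb d zeta Hd Hz). fold kappa in Hlb.
assert (Hw := Cexp_neq0 (RtoC PI * Csinh zeta)). fold (wf zeta) in Hw.
set (W := Cmod (wf zeta)) in *. set (P := Cmod (1 + wf zeta)%C) in *.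
assert (HW : 0 < W) by (apply Cmod_gt_0; exact Hw).
assert (HP : 0 < P) by nra.
assert (Hq0 : 0 < q) by (apply Rdiv_lt_0_compat; lra).
assert (Hqk : q <= / kappa).
{ unfold q. apply Rmult_le_reg_r with (P * kappa); [nra|].
  replace (W / P * (P * kappa)) with (W * kappa) by (field; lra).
  replace (/ kappa * (P * kappa)) with P by (field; lra). nra. }
set (cd := c_d d).
assert (Hcd : cd = 1 + / kappa) by (unfold cd, c_d, kappa; unfold Rdiv; ring).
assert (Hik : 1 <= / kappa) by (rewrite <- Rinv_1; apply Rinv_le_contravar; lra).
set (L := ln (1 + cd)).
assert (HL : 0 < L) by (unfold L; rewrite <- ln_1; apply ln_increasing; lra).
assert (HeL : exp L = 1 + cd) by (unfold L; apply exp_ln; lra).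
assert (Hct : ctilde_d d = (1 + L) / L * cd) by reflexivity.
rewrite Hct.
assert (Hcd2 : cd <= (1 + L) / L * cd).
{ replace ((1 + L) / L * cd) with (cd + cd / L) by (field; lra).
  assert (0 < cd / L) by (apply Rdiv_lt_0_compat; lra). lra. }
split; [lra|]. split; [lra|].
set (r := Cmod (psi zeta)).
assert (Hr0 : 0 <= r) by apply Cmod_ge_0.
destruct (Rle_lt_dec L r) as [HLr|HLr].
- assert (q * (1 + r) <= cd * (1 + r)) by (apply Rmult_le_compat_r; lra).
  assert (cd * (1 + r) <= (1 + L) / L * cd * r).
  { apply Rmult_le_reg_r with L; [exact HL|].
    replace ((1 + L) / L * cd * r * L) with (cd * ((1 + L) * r)) by (field; lra).
    replace (cd * (1 + r) * L) with (cd * (L * (1 + r))) by ring.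
    apply Rmult_le_compat_l; nra. }
  lra.
- assert (Hqe : q = Cmod (1 - Cexp (- psi zeta))%C) by (unfold q, W, P; apply (q_eq d psi psi' Hpsi zeta Hz)).
  assert (Hq1 : q <= exp r - 1).
  { rewrite Hqe. eapply Rle_trans; [apply one_minus_Cexp|]. rewrite Cmod_opp. fold r. lra. }
  assert (Hcv := exp_convex r L HL ltac:(lra)). rewrite HeL in Hcv.
  assert (Hq2 : q * L <= r * cd) by nra.
  apply Rmult_le_reg_r with L; [exact HL|].
  replace ((1 + L) / L * cd * r * L) with (r * cd * (1 + L)) by (field; lra).
  assert (q * L * (1 + r) <= r * cd * (1 + r)) by (apply Rmult_le_compat_r; lra).
  assert (r * cd * (1 + r) <= r * cd * (1 + L)) by (apply Rmult_le_compat_l; nra).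
  nra.
Qed.
Lemma Cexp_real t : Cexp (RtoC t) = RtoC (exp t).
Proof. apply Ceq; unfold Cexp, RtoC, Re, Im; simpl; rewrite ?cos_0, ?sin_0; ring. Qed.

Lemma exp_PI12 : 1299/1000 <= exp (PI / 12).
Proof.
assert (Hpi := PI_gt_314).
apply Rle_trans with (exp (314/1200)).
- eapply Rle_trans; [|apply (exp_ge_taylor (314/1200) 4); lra].
  simpl. lra.
- apply exp_mono. lra.
Qed.

Lemma cosh_pos x : 0 < cosh x.
Proof. unfold cosh. generalize (exp_pos x) (exp_pos (- x)). lra. Qed.

Theorem lemma11 (d : R) (hd : 0 < d < PI / 2)
  (psi psi' : C -> C) (Hpsi : is_DE_psi d psi psi')
  (f : C -> C) (K beta alpha : R)
  (hK : 0 < K) (hbeta : 0 < beta) (halpha : 0 < alpha <= 1)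
  (Hf : analytic_on (image_strip d psi) f)
  (Hbound : forall z, image_strip d psi z ->
     Cmod (f z) <=
       K * Cmod (Cppow (z / (1 + z))%C (RtoC (alpha - 1)) *
                 Cexp (- (RtoC beta * z)))) :
  LDE (2 * Rpower (ctilde_d d) (1 - alpha) * K)
      (2 * Rpower (exp (PI / 12)) (1 - alpha) * K)
      (2 * alpha) (2 * beta) d
      (fun zeta => (f (psi zeta) * psi' zeta)%C).
Proof.
split; [apply (F_analytic d psi psi' Hpsi f Hf)|].
split.
- intros zeta Hz.
  destruct (hq_complex d psi psi' Hpsi zeta hd Hz) as [H0 [H1 H2]].
  apply (bound_general d psi psi' Hpsi f K beta alpha (ctilde_d d) zeta); assumption.
- intros x.
  assert (Hz : strip d (RtoC x)) by (unfold strip; simpl; rewrite Rabs_R0; lra).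
  assert (Hpi := PI_gt_314).
  assert (HC := exp_PI12).
  assert (Hwf : wf (RtoC x) = RtoC (exp (PI * sinh x))).
  { unfold wf. rewrite Csinh_real, <- RtoC_mult, Cexp_real. reflexivity. }
  assert (Hps : psi (RtoC x) = RtoC (ln (1 + exp (PI * sinh x)))) by apply (proj1 (proj2 Hpsi)).
  set (w0 := exp (PI * sinh x)) in *.
  assert (Hw0 : 0 < w0) by apply exp_pos.
  set (z0 := ln (1 + w0)) in *.
  assert (Hz0 : 0 < z0) by (unfold z0; rewrite <- ln_1; apply ln_increasing; lra).
  assert (He : exp z0 = 1 + w0) by (unfold z0; apply exp_ln; lra).
  assert (Hq : Cmod (wf (RtoC x)) / Cmod (1 + wf (RtoC x))%C = 1 - exp (- z0)).
  { rewrite Hwf, <- RtoC_plus, !Cmod_R, !Rabs_right by lra.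
    rewrite exp_Ropp, He. field. lra. }
  assert (Hr : Cmod (psi (RtoC x)) = z0) by (rewrite Hps, Cmod_R, Rabs_right; lra).
  assert (Hnum := num_bound z0 Hz0).
  assert (Hexz : 0 < exp (- z0)) by apply exp_pos.
  eapply Rle_trans.
  + apply (bound_general d psi psi' Hpsi f K beta alpha (exp (PI / 12)) (RtoC x)); try assumption.
    * lra.
    * rewrite Hq. lra.
    * rewrite Hq, Hr. assert (1299/1000 * z0 <= exp (PI/12) * z0) by (apply Rmult_le_compat_r; lra). lra.
  + right. rewrite Ccosh_real, Cmod_R, Rabs_right by (left; apply cosh_pos).
    rewrite Csinh_real, <- RtoC_mult, <- RtoC_opp, !Cexp_real, <- !RtoC_plus, !Cmod_R.
    rewrite !Rabs_right by (left; generalize (exp_pos (PI * sinh x)) (exp_pos (- (PI * sinh x))); lra).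
    reflexivity.
Qed.
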